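(* Let $d\ge2$. There is a constant $C_d>0$ depending only on $d$ such that for all finite sets $X,Y\subset\mathbb{Z}^d$, $$\#(X\setminus Y)\le|\zeta(X)\setminus\zeta(Y)|+C_dP(Y),\qquad\text{and hence}\qquad \#(X\,\Delta\,Y)\le|\zeta(X)\,\Delta\,\zeta(Y)|+C_d\big(P(X)+P(Y)\big).$$
   Context: For $X\subset\mathbb{Z}^d$ and $p\in X$, $\mathrm{val}(p)=\#\{q\in\mathbb{Z}^d\setminus X:|p-q|=1\}$ and $P(X)=\sum_{p\in X}\mathrm{val}(p)$. Kuhn decomposition: for a permutation $\pi$ of $\{1,\dots,d\}$, $T_\pi=\{x\in\mathbb{R}^d:0\le x_{\pi(d)}\le\dots\le x_{\pi(1)}\le1\}$, $\mathcal{T}=\{z+T_\pi:z\in\mathbb{Z}^d,\pi\}$, $\mathcal T(i)=\{T\in\mathcal T:i\in T\}$, and $\zeta(X)=\bigcup_{i\in X}\bigcup_{T\in\mathcal T(i)}T$. $|\cdot|$ is Lebesgue measure, $\#$ cardinality, $\Delta$ symmetric difference. *)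

(* Defs.v *)
From HB Require Import structures.
From mathcomp Require Import all_boot all_order all_algebra all_fingroup.
From mathcomp Require Import finmap.
From mathcomp Require Import all_classical all_reals all_analysis.

Set Implicit Arguments.
Unset Strict Implicit.
Unset Printing Implicit Defensive.

Import Order.TTheory GRing.Theory Num.Theory.
Local Open Scope classical_set_scope.
Local Open Scope ring_scope.

Section Defs.
Variable R : realType.

Definition zpt (d : nat) := {ffun 'I_d -> int}.
Definition rpt (d : nat) := 'I_d -> R.

Definition nbrs (d : nat) (p : zpt d) : {fset zpt d} :=
  ([fset ([ffun j => (p j + (j == i)%:Z)%R] : zpt d) | i in 'I_d] `|`
   [fset ([ffun j => (p j - (j == i)%:Z)%R] : zpt d) | i in 'I_d])%fset.

Definition valence (d : nat) (X : {fset zpt d}) (p : zpt d) : nat :=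
  #|` [fset q in nbrs p | q \notin X] |%fset.

Definition perimeter (d : nat) (X : {fset zpt d}) : nat :=
  (\sum_(p <- X) valence X p)%N.

(* T_pi = { x : 0 <= x_{pi(d)} <= ... <= x_{pi(1)} <= 1 } (0-indexed here) *)
Definition T_pi (d : nat) (pi : 'S_d) : set (rpt d) :=
  [set x | (forall i : 'I_d, 0 <= x i <= 1) /\
           (forall k l : 'I_d, (k <= l)%N -> x (pi l) <= x (pi k))].

Definition kuhn (d : nat) (z : zpt d) (pi : 'S_d) : set (rpt d) :=
  [set y | T_pi pi (fun j => y j - (z j)%:~R)].

Definition embed (d : nat) (i : zpt d) : rpt d := fun j => (i j)%:~R.

Definition zeta (d : nat) (X : {fset zpt d}) : set (rpt d) :=
  [set y | exists i, i \in X /\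
     exists (z : zpt d) (pi : 'S_d), kuhn z pi (embed i) /\ kuhn z pi y].

Definition box (d : nat) (a b : rpt d) : set (rpt d) :=
  [set x | forall i : 'I_d, a i <= x i <= b i].

(* Lebesgue (outer) measure on R^d: infimum of total volumes of countable
   box covers.  On the sets considered here (finite unions of simplices,
   hence Lebesgue measurable) it is the Lebesgue measure. *)
Definition leb (d : nat) (A : set (rpt d)) : \bar R :=
  ereal_inf [set (\sum_(k <oo) (\prod_(i < d) (ab.2 k i - ab.1 k i))%:E)%E
            | ab in [set ab : (nat -> rpt d) * (nat -> rpt d) |
                (forall k i, ab.1 k i <= ab.2 k i) /\
                A `<=` \bigcup_k box (ab.1 k) (ab.2 k)]].

End Defs.

(* Main.v *)
Require Import Defs.
From HB Require Import structures.
From mathcomp Require Import all_boot all_order all_algebra all_fingroup.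
From mathcomp Require Import finmap.
From mathcomp Require Import all_classical all_reals all_analysis.
Import Order.TTheory GRing.Theory Num.Theory.
Local Open Scope classical_set_scope.
Local Open Scope ring_scope.
Import numFieldNormedType.Exports.
From mathcomp Require Import zify ring lra.
Definition RT (R : realType) (d : nat) := fun _ : 'I_d => (R : ptopologicalType).
HB.instance Definition _ (R : realType) (d : nat) :=
  Pointed.copy (prod_topology (RT R d)) (forall x, RT R d x).
Section Compact.
Variable R : realType.
Variable d : nat.
Local Notation P := (prod_topology (RT R d)).

Lemma open_box_seq (s : seq 'I_d) (l u : 'I_d -> R) :
  open ([set x : P | forall j, j \in s -> l j < x j < u j]).
Proof.
elim: s => [|j s IH].
  suff -> : [set x : P | forall j, j \in [::] -> l j < x j < u j] = setT by exact: openT.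
  by apply/seteqP; split => x //= _ j; rewrite in_nil.
have -> : [set x : P | forall j0, j0 \in j :: s -> l j0 < x j0 < u j0] =
  (@proj 'I_d (RT R d) j @^-1` `]l j, u j[) `&`
  [set x : P | forall j, j \in s -> l j < x j < u j].
  apply/seteqP; split => x /=.
    move=> H; split; first by rewrite in_itv /=; apply: H; rewrite mem_head.
    by move=> k ks; apply: H; rewrite in_cons ks orbT.
  move=> [H1 H2] k; rewrite in_cons => /orP [/eqP ->|ks]; last exact: H2.
  by move: H1; rewrite /proj in_itv.
apply: openI => //; apply: open_comp; last exact: interval_open.
by move=> x _; exact: proj_continuous.
Qed.

Lemma fin_subcover (lo hi : 'I_d -> R) (a b : nat -> 'I_d -> R) (del : nat -> R) :
 (forall k, 0 < del k) ->
 (forall x : 'I_d -> R, (forall j, lo j <= x j <= hi j) ->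
     exists k, forall j, a k j <= x j <= b k j) ->
 exists K, forall x : 'I_d -> R, (forall j, lo j <= x j <= hi j) ->
     exists2 k, (k < K)%N & forall j, a k j - del k < x j < b k j + del k.
Proof.
move=> dpos cov.
have cpt : compact [set x : P | forall j, [set` `[lo j, hi j]] (x j)].
  apply: (@tychonoff 'I_d (RT R d) (fun j => [set` `[lo j, hi j]])) => j.
  exact: segment_compact.
move: cpt; rewrite (compact_cover P) => cpt.
have := cpt nat setT (fun k => [set x : P | forall j, j \in enum 'I_d ->
   a k j - del k < x j < b k j + del k]).
case.
- by move=> k _; exact: open_box_seq.
- move=> x /= hx.
  have [k hk] : exists k, forall j, a k j <= x j <= b k j.
    by apply: cov => j; move: (hx j); rewrite /= in_itv.
  exists k => // j _; move: (hk j) (dpos k) => /andP [h1 h2] hd.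
  apply/andP; split.
    by rewrite ltrBlDr; apply: (le_lt_trans h1); rewrite ltrDl.
  by apply: (le_lt_trans h2); rewrite ltrDl.
move=> D _ HD.
exists (\max_(k <- D) k).+1 => x hx.
have [k kD hk] : exists2 k, k \in D & forall j, j \in enum 'I_d ->
   a k j - del k < x j < b k j + del k.
  have : [set x : P | forall j, [set` `[lo j, hi j]] (x j)] x.
    by move=> j /=; rewrite in_itv /=; exact: hx.
  by move/HD => [k /= kD hk]; exists k.
exists k; last by move=> j; apply: hk; rewrite mem_enum.
rewrite ltnS; exact: (leq_bigmax_seq _ kD).
Qed.
End Compact.

Lemma count_itv (W lo hi : nat) :
  (\sum_(x < W) ((lo <= x) && (x <= hi)))%N = (minn W hi.+1 - lo)%N.
Proof.
elim: W => [|W IH]; first by rewrite big_ord0 min0n.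
rewrite big_ord_recr /= IH.
case: (leqP lo W) => h1; case: (leqP W hi) => h2 /=; lia.
Qed.

Section B.
Variable R : realType.

Lemma count_diam (W : nat) (P : pred 'I_W) (L : R) : 0 <= L ->
  (forall x y : 'I_W, P x -> P y -> (y : nat)%:R - (x : nat)%:R <= L) ->
  ((\sum_(x < W) P x)%N%:R <= L + 1 :> R).
Proof.
move=> L0 HP.
case: (pickP P) => [x0 Px0|P0]; last first.
  rewrite big1 ?add0r //; last by move=> x _; rewrite P0.
  by rewrite ler_wpDl // ler01.
case: (arg_minnP (fun x : 'I_W => (x : nat)) Px0) => xm Pxm minm.
case: (arg_maxnP (fun x : 'I_W => (x : nat)) Px0) => xM PxM maxM.
have le1 : (\sum_(x < W) P x <= \sum_(x < W) ((xm <= x) && (x <= xM)))%N.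
  apply: leq_sum => x _; case Px: (P x) => //.
  have h := maxM _ Px; rewrite /geq /= in h.
  by rewrite (minm _ Px) h.
rewrite count_itv in le1.
have hmM : (xm <= xM)%N by apply: minm.
have le2 : (\sum_(x < W) P x <= xM.+1 - xm)%N by apply: (leq_trans le1); lia.
apply: (le_trans (y := (xM.+1 - xm)%N%:R)); first by rewrite ler_nat.
rewrite subSn // -addn1 natrD natrB // lerD2r.
exact: HP.
Qed.

End B.

Lemma sum_const_seq (T : Type) (s : seq T) (c : nat) :
  (\sum_(i <- s) c = size s * c)%N.
Proof. by elim: s => [|x s IH]; rewrite ?big_nil ?big_cons ?IH //= mulSn. Qed.

Lemma sum_prod_ind (d W : nat) (Q : 'I_d -> pred 'I_W) :
  (\sum_(g : {ffun 'I_d -> 'I_W}) [forall j, Q j (g j)])%N =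
  (\prod_(j < d) \sum_(x < W) Q j x)%N.
Proof.
rewrite bigA_distr_bigA; apply: eq_bigr => g _.
case: (boolP [forall j, Q j (g j)]) => [/forallP H|/forallPn [j nj]].
  by rewrite big1 // => j _; rewrite H.
by rewrite (bigD1 j) //= (negbTE nj) mul0n.
Qed.

Section Grid.
Variable R : realType.
Variable d : nat.

Lemma grid_count (S : {fset zpt d}) (K M t : nat) (c e : nat -> 'I_d -> R) :
  (0 < t)%N -> (2 <= M)%N -> (forall k j, c k j <= e k j) ->
  (forall (i : zpt d) (x : 'I_d -> R), i \in S ->
     (forall j, (i j)%:~R + (M%:R)^-1 <= x j <= (i j)%:~R + 1 - (M%:R)^-1) ->
     exists2 k, (k < K)%N & forall j, c k j <= x j <= e k j) ->
  #|`S|%:R * (1 - 2 / M%:R) ^+ d <=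
    \sum_(k < K) \prod_(j < d) (e k j - c k j + ((M * t)%:R)^-1).
Proof.
move=> t0 M2 ce Hcov.
set N := (M * t)%N.
have N0 : (0 < N)%N by rewrite /N; lia.
have N2t : (2 * t <= N)%N by rewrite /N; nia.
have NR0 : (N%:R : R) != 0 by rewrite pnatr_eq0 -lt0n.
set B := (\sum_(i <- S) \sum_(j < d) `|i j|%N)%N.
have hB : forall i j, i \in S -> (`|i j| <= B)%N.
  move=> i j iS; rewrite /B (big_rem i) //=; apply: leq_trans (leq_addr _ _).
  by rewrite (bigD1 j) //=; exact: leq_addr.
set W := (N * (2 * B + 1)).+1.
pose pt1 (x : 'I_W) : R := ((x : nat)%:R - (N * B)%:R) / N%:R.
pose ni (i : zpt d) j := absz (i j + B%:Z).
have niE : forall i j, i \in S -> (ni i j)%:R = (i j)%:~R + B%:R :> R.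
  move=> i j iS; rewrite /ni.
  have hp : (0 <= i j + B%:Z)%R.
    have := hB i j iS; case: (i j) => n /=; lia.
  by rewrite natr_absz ger0_norm // rmorphD.
have niB : forall i j, i \in S -> (ni i j <= 2 * B)%N.
  move=> i j iS; have := hB i j iS; rewrite /ni; case: (i j) => n /=; lia.
pose cube (i : zpt d) (g : {ffun 'I_d -> 'I_W}) :=
  [forall j, (N * ni i j + t <= g j)%N && (g j <= N * ni i j + (N - t))%N].
pose box k (g : {ffun 'I_d -> 'I_W}) := [forall j, c k j <= pt1 (g j) <= e k j].
have C1 : forall i, i \in S -> (\sum_g cube i g)%N = ((N - 2 * t).+1 ^ d)%N.
  move=> i iS; rewrite /cube (@sum_prod_ind _ _ (fun j (x : 'I_W) => (N * ni i j + t <= x)%N && (x <= N * ni i j + (N - t))%N)).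
  rewrite -[in RHS](card_ord d) -prod_nat_const; apply: eq_bigr => j _.
  rewrite count_itv; have := niB i j iS; rewrite /W; nia.
have C2 : forall g, (\sum_(i <- S) cube i g <= \sum_(k < K) box k g)%N.
  move=> g; case: (boolP (has (cube^~ g) S)) => [/hasP [i0 i0S ci0]|hn]; last first.
    rewrite big1_seq //; move=> i /andP [_ iS].
    by case ci: (cube i g) => //; move/hasP: hn; case; exists i.
  have uniq_c : forall i, i \in S -> cube i g -> i = i0.
    move=> i iS ci; apply/ffunP => j.
    move: ci ci0 => /forallP/(_ j) c1 /forallP/(_ j) c2.
    have e1 : ni i j = ni i0 j.
      have h1 : (N * ni i j < N * (ni i0 j).+1)%N by lia.
      have h2 : (N * ni i0 j < N * (ni i j).+1)%N by lia.
      rewrite ltn_pmul2l // in h1; rewrite ltn_pmul2l // in h2; lia.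
    have := hB i j iS; have := hB i0 j i0S; move: e1; rewrite /ni.
    case: (i j) => n; case: (i0 j) => m /=; lia.
  rewrite (bigD1_seq i0) //= ?fset_uniq // ci0 big1_seq; last first.
    by move=> i /andP [ni0 iS]; apply/eqP; rewrite eqb0; apply: contra ni0 => ci;
       apply/eqP; exact: uniq_c.
  rewrite addn0.
  have [k kK hk] : exists2 k, (k < K)%N & forall j, c k j <= pt1 (g j) <= e k j.
    apply: (Hcov i0) => // j; move: ci0 => /forallP/(_ j) /andP [h1 h2].
    have hM : (M%:R : R)^-1 = t%:R / N%:R.
      have hM0 : (M%:R : R) != 0 by rewrite pnatr_eq0; lia.
      have ht0 : (t%:R : R) != 0 by rewrite pnatr_eq0; lia.
      by rewrite /N natrM; field; apply/andP.
    clearbody N.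
    rewrite hM /pt1 (_ : (i0 j)%:~R = (ni i0 j)%:R - B%:R); last by rewrite niE //; ring.
    have {}h1 : ((N * ni i0 j + t)%N%:R <= (g j : nat)%:R :> R) by rewrite ler_nat.
    have {}h2 : ((g j : nat)%:R <= (N * ni i0 j + (N - t))%N%:R :> R) by rewrite ler_nat.
    rewrite !natrD !natrM in h1 h2; rewrite natrB in h2; last lia.
    have u0 : 0 < (N%:R : R)^-1 by rewrite invr_gt0 ltr0n.
    have Nu : (N%:R : R) * (N%:R)^-1 = 1 by rewrite mulfV.
    move: u0 Nu h1 h2.
    set u := (N%:R : R)^-1; set n := ((ni i0 j)%:R : R); set G := ((g j : nat)%:R : R).
    move=> u0 Nu h1 h2.
    rewrite natrM.
    have p1 : 0 <= (G - (N%:R * n + t%:R)) * u by apply: mulr_ge0; [rewrite subr_ge0|exact: ltW].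
    have p2 : 0 <= (N%:R * n + (N%:R - t%:R) - G) * u by apply: mulr_ge0; [rewrite subr_ge0|exact: ltW].
    have e1 : N%:R * n * u = n by rewrite mulrC mulrA (mulrC u) Nu mul1r.
    have e2 : N%:R * B%:R * u = B%:R by rewrite mulrC mulrA (mulrC u) Nu mul1r.
    have e3 : N%:R * u = 1 by [].
    apply/andP; split.
      move: p1; rewrite mulrBl mulrDl e1 => p1.
      rewrite mulrBl e2; lra.
    move: p2; rewrite mulrBl mulrDl mulrBl e1 e3 => p2.
    rewrite mulrBl e2; lra.
  rewrite (bigD1 (Ordinal kK)) //=.
  have -> : box k g by apply/forallP => j; exact: hk.
  by rewrite leq_addr.
have C3 : forall k, ((\sum_g box k g)%N%:R : R) <=
    \prod_(j < d) (N%:R * (e k j - c k j) + 1).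
  move=> k; rewrite /box (@sum_prod_ind _ _ (fun j (x : 'I_W) => c k j <= pt1 x <= e k j)).
  rewrite natr_prod; apply: ler_prod => j _; apply/andP; split; first exact: ler0n.
  apply: count_diam.
    by apply: mulr_ge0; [exact: ler0n | rewrite subr_ge0].
  move=> x y /andP [hx1 hx2] /andP [hy1 hy2].
  have -> : (y : nat)%:R - (x : nat)%:R = N%:R * (pt1 y - pt1 x) :> R.
    by rewrite /pt1; field.
  apply: ler_wpM2l; first exact: ler0n.
  lra.
have E1 : (#|`S| * ((N - 2 * t).+1 ^ d))%N = (\sum_(i <- S) \sum_g cube i g)%N.
  by rewrite -sum_const_seq; apply: eq_big_seq => i iS; rewrite C1.
have E2 : (\sum_(i <- S) \sum_g cube i g <= \sum_(k < K) \sum_g box k g)%N.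
  rewrite exchange_big [X in (_ <= X)%N]exchange_big /=.
  by apply: leq_sum => g _; exact: C2.
have E3 : (#|`S|%:R * ((N - 2 * t).+1)%:R ^+ d : R) <=
    \sum_(k < K) \prod_(j < d) (N%:R * (e k j - c k j) + 1).
  rewrite -natrX -natrM E1; apply: (le_trans (y := ((\sum_(k < K) \sum_g box k g)%N)%:R)).
    by rewrite ler_nat.
  by rewrite natr_sum; apply: ler_sum => k _; exact: C3.
have E4 : forall k : 'I_K, \prod_(j < d) (N%:R * (e k j - c k j) + 1) =
    N%:R ^+ d * \prod_(j < d) (e k j - c k j + ((M * t)%:R)^-1).
  move=> k; rewrite -/N.
  rewrite (eq_bigr (fun j => N%:R * (e k j - c k j + (N%:R)^-1))); last first.
    by move=> j _; field.
  by rewrite big_split /= -(big_mkord xpredT (fun=> N%:R)) prodr_const_nat subn0.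
rewrite (eq_bigr _ (fun k _ => E4 k)) -mulr_sumr in E3.
have E5 : (N%:R : R) * (1 - 2 / M%:R) <= ((N - 2 * t).+1)%:R.
  have hM0 : (M%:R : R) != 0 by rewrite pnatr_eq0; lia.
  rewrite (_ : ((N - 2 * t).+1)%:R = N%:R - 2%:R * t%:R + 1 :> R); last first.
    by rewrite -addn1 natrD natrB // natrM.
  have -> : (N%:R : R) * (1 - 2 / M%:R) = N%:R - 2%:R * t%:R.
    by rewrite /N natrM; field.
  lra.
have E6 : (N%:R : R) ^+ d * (1 - 2 / M%:R) ^+ d <= ((N - 2 * t).+1)%:R ^+ d.
  rewrite -exprMn; apply: lerXn2r => //; rewrite ?nnegrE ?ler0n //.
  apply: mulr_ge0; first exact: ler0n.
  have : (2%:R : R) <= M%:R by rewrite ler_nat.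
  have : (0 : R) < M%:R by rewrite ltr0n; lia.
  move=> h1 h2; rewrite subr_ge0 ler_pdivrMr //; lra.
have Np : (0 : R) < N%:R ^+ d by apply: exprn_gt0; rewrite ltr0n.
rewrite -(ler_pM2l Np); apply: le_trans E3.
rewrite mulrCA; apply: ler_wpM2l; first exact: ler0n.
exact: E6.
Qed.
End Grid.

Section Aux.
Variable R : realType.

Lemma prod_add_le (I : Type) (r : seq I) (F : I -> R) (s : R) :
  (forall i, 0 <= F i) -> 0 <= s <= 1 ->
  \prod_(i <- r) (F i + s) <=
    \prod_(i <- r) F i + s * 2 ^+ (size r) * \prod_(i <- r) (F i + 1).
Proof.
move=> F0 /andP [s0 s1]; elim: r => [|x r IH].
  by rewrite !big_nil expr0 !mulr1 lerDl.
rewrite !big_cons /=.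
set P := \prod_(i <- r) (F i + s) in IH *.
set A := \prod_(i <- r) F i in IH *.
set Q := \prod_(i <- r) (F i + 1) in IH *.
set c := 2 ^+ size r in IH *.
have P0 : 0 <= P by apply: prodr_ge0 => i _; apply: addr_ge0.
have A0 : 0 <= A by apply: prodr_ge0.
have AQ : A <= Q.
  apply: ler_prod => i _; apply/andP; split => //.
  by rewrite lerDl.
have c1 : 1 <= c by apply: exprn_ege1; lra.
have Fx := F0 x.
rewrite exprS.
have h1 : (F x + s) * P <= (F x + s) * (A + s * c * Q).
  by apply: ler_wpM2l => //; apply: addr_ge0.
apply: (le_trans h1).
have Q0 : 0 <= Q by apply: le_trans AQ.
have h2 : A <= c * Q.
  by apply: (le_trans AQ); rewrite ler_peMl.
have h3 : s * (c * Q) <= c * Q by rewrite ler_piMl // mulr_ge0 // (le_trans _ c1).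
have h4 : 0 <= s * (c * Q * F x) by rewrite !mulr_ge0 // (le_trans _ c1).
have t1 : s * A <= s * (c * Q) by apply: ler_wpM2l.
have t2 : s * (s * (c * Q)) <= s * (c * Q) by apply: ler_wpM2l.
have -> : (F x + s) * (A + s * c * Q) = F x * A + (s * A + s * (s * (c * Q))) + s * (c * Q * F x) by ring.

have -> : F x * A + s * (2 * c) * ((F x + 1) * Q) = F x * A + 2 * (s * (c * Q)) + 2 * (s * (c * Q * F x)) by ring.
lra.
Qed.

Lemma bernoulli (u : R) (n : nat) : 0 <= u <= 1 -> 1 - n%:R * u <= (1 - u) ^+ n.
Proof.
move=> /andP [u0 u1]; elim: n => [|n IH]; first by rewrite mul0r subr0 expr0.
rewrite exprS.
have p0 : 0 <= (1 - u) ^+ n by apply: exprn_ge0; lra.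
have h : 0 <= u * (n%:R * u) by rewrite mulr_ge0 // mulr_ge0.
rewrite -natr1.
nra.
Qed.

Lemma geom_sum (K : nat) : \sum_(k < K) (2 ^+ k.+1)^-1 = 1 - (2 ^+ K)^-1 :> R.
Proof.
elim: K => [|K IH]; first by rewrite big_ord0 expr0 invr1 subrr.
rewrite big_ord_recr /= IH exprS.
have h : (2 ^+ K : R) != 0 by rewrite expf_neq0.
by field.
Qed.

End Aux.

Lemma cover_all (T : eqType) (S : seq T) (Pk : T -> nat -> Prop) :
  (forall i K K', (K <= K')%N -> Pk i K -> Pk i K') ->
  (forall i, i \in S -> exists K, Pk i K) -> exists K, forall i, i \in S -> Pk i K.
Proof.
move=> mono; elim: S => [|x S IH] H; first by exists 0%N.
have [K1 h1] := H x (mem_head _ _).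
have [K2 h2] : exists K, forall i, i \in S -> Pk i K.
  by apply: IH => i iS; apply: H; rewrite in_cons iS orbT.
exists (maxn K1 K2) => i; rewrite in_cons => /orP [/eqP ->|iS].
  by apply: mono h1; rewrite leq_maxl.
by apply: mono (h2 _ iS); rewrite leq_maxr.
Qed.

Section LB.
Variable R : realType.
Variable d : nat.

Lemma fin_arith (et n V : R) : 0 < et -> n - et / 3 <= V + et / 6 + et / 6 -> n <= V + et.
Proof. move=> h1 h2; lra. Qed.

Lemma core_claim (S : {fset zpt d}) (A : set ('I_d -> R)) (a b : nat -> 'I_d -> R) (et : R) :
  (forall i x, i \in S -> (forall j, (i j)%:~R < x j < (i j)%:~R + 1) -> A x) ->
  (forall k j, a k j <= b k j) ->
  A `<=` \bigcup_k box (a k) (b k) ->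
  0 < et -> et <= 1 ->
  exists K, #|`S|%:R <= \sum_(k < K) \prod_(j < d) (b k j - a k j) + et.
Proof.
move=> HA hab hcov et0 et1.
set n : R := #|`S|%:R.
have n0 : 0 <= n by exact: ler0n.
have [M0 hM0] : exists M0 : nat, 6 * n * d%:R / et < M0%:R.
  exists (Num.Def.archi_bound (6 * n * d%:R / et)); apply: archi_boundP.
  by apply: divr_ge0; [rewrite !mulr_ge0 // ler0n|exact: ltW].
set M := M0.+2.
have M2 : (2 <= M)%N by [].
have MR : (2 : R) <= M%:R by rewrite (ler_nat R 2).
have MR0 : (0 : R) < M%:R by lra.
set Cd : R := 2 ^+ size (index_enum 'I_d).
have Cd1 : 1 <= Cd by apply: exprn_ege1; lra.
pose L k j := b k j - a k j.
have L0 : forall k j, 0 <= L k j by move=> k j; rewrite subr_ge0.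
pose Q k := \prod_(j < d) (L k j + 1).
have Q1 : forall k, 1 <= Q k.
  move=> k; have h : \prod_(j < d) (1 : R) <= Q k.
    by apply: ler_prod => j _; rewrite ler01 /= lerDr.
  by rewrite big1 in h.
pose del k := et / (12 * Cd * Q k * 2 ^+ k.+1).
have D12 : forall k, 12 <= 12 * Cd * Q k * 2 ^+ k.+1.
  move=> k; have h2 : (1 : R) <= 2 ^+ k.+1 by apply: exprn_ege1; lra.
  have h3 : 1 <= Cd * (Q k * 2 ^+ k.+1) by rewrite !mulr_ege1 // Q1.
  rewrite -!mulrA; lra.
have del0 : forall k, 0 < del k.
  by move=> k; apply: divr_gt0 => //; have := D12 k; lra.
have del12 : forall k, del k <= 1 / 12.
  move=> k; rewrite /del ler_pdivrMr; last by have := D12 k; lra.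
  by have := D12 k; nra.
pose lo (i : zpt d) j : R := (i j)%:~R + (M%:R)^-1.
pose hi (i : zpt d) j : R := (i j)%:~R + 1 - (M%:R)^-1.
have Mi : 0 < (M%:R : R)^-1 < 1.
  by rewrite invr_gt0 MR0 /= invf_lt1 //; lra.
have [K HK] : exists K, forall i, i \in S -> forall x : 'I_d -> R,
    (forall j, lo i j <= x j <= hi i j) ->
    exists2 k, (k < K)%N & forall j, a k j - del k < x j < b k j + del k.
  apply: cover_all.
    move=> i K K' KK' H x hx; have [k kK hk] := H x hx.
    by exists k => //; apply: leq_trans KK'.
  move=> i iS; apply: fin_subcover => // x hx.
  have Ax : A x.
    apply: (HA i) => // j; have := hx j; rewrite /lo /hi; move: Mi.
    set m := (M%:R : R)^-1; set ij := (i j)%:~R.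
    move=> /andP [m0 m1] /andP [h1 h2]; apply/andP; split; lra.
  by have [k _ hk] := hcov _ Ax; exists k.
have [T0 hT0] : exists T0 : nat, 6 * Cd * (\sum_(k < K) Q k) / et < T0%:R.
  exists (Num.Def.archi_bound (6 * Cd * (\sum_(k < K) Q k) / et)); apply: archi_boundP.
  apply: divr_ge0; last exact: ltW.
  apply: mulr_ge0; first by apply: mulr_ge0 => //; lra.
  by apply: sumr_ge0 => k _; apply: le_trans (Q1 k).
set T := T0.+1.
have G := @grid_count R d S K M T (fun k j => a k j - del k) (fun k j => b k j + del k)
  isT M2.
have {G} G : n * (1 - 2 / M%:R) ^+ d <=
    \sum_(k < K) \prod_(j < d) (b k j + del k - (a k j - del k) + ((M * T)%:R)^-1).
  apply: G.
    by move=> k j; have := hab k j; have := del0 k; lra.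
  move=> i x iS hx; have [k kK hk] := HK i iS x hx.
  exists k => // j; have /andP [h1 h2] := hk j; apply/andP; split; exact: ltW.
set N := (M * T)%N in G.
have NR : (T0.+1%:R : R) <= N%:R by rewrite ler_nat /N /T leq_pmull.
have N2 : (2 : R) <= N%:R by rewrite (ler_nat R 2) /N /T; apply: leq_trans M2 (leq_pmulr _ _).
have Hk : forall k, \prod_(j < d) (b k j + del k - (a k j - del k) + (N%:R)^-1) <=
   \prod_(j < d) L k j + (2 * del k * Cd * Q k + (N%:R)^-1 * Cd * Q k).
  move=> k.
  rewrite (eq_bigr (fun j => L k j + (2 * del k + (N%:R)^-1))); last first.
    by move=> j _; rewrite /L; ring.
  have s01 : 0 <= 2 * del k + (N%:R)^-1 <= 1.
    have := del12 k; have := del0 k.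
    have : (N%:R : R)^-1 <= 2^-1 by rewrite lef_pV2 ?posrE //; lra.
    have : 0 < (N%:R : R)^-1 by rewrite invr_gt0; lra.
    move=> ha hb hc hd; apply/andP; split; lra.
  have := @prod_add_le R _ (index_enum 'I_d) (L k) _ (L0 k) s01.
  rewrite -/Cd -/(Q k) => h.
  apply: (le_trans h); rewrite lerD2l le_eqVlt; apply/orP; left; apply/eqP; ring.
have S1 : \sum_(k < K) (2 * del k * Cd * Q k) <= et / 6.
  rewrite (eq_bigr (fun k : 'I_K => et / 6 * (2 ^+ k.+1)^-1)); last first.
    move=> k _; rewrite /del.
    have h1 : Cd != 0 by apply: lt0r_neq0; lra.
    have h2 : Q k != 0 by apply: lt0r_neq0; have := Q1 k; lra.
    have h3 : (2 : R) ^+ k.+1 != 0 by apply: expf_neq0.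
    by field; rewrite h1 h2 h3.
  rewrite -mulr_sumr geom_sum.
  have : 0 <= ((2 : R) ^+ K)^-1 by rewrite invr_ge0 exprn_ge0.
  have : 0 <= et / 6 by apply: divr_ge0; lra.
  move=> h1 h2; rewrite -[X in _ <= X]mulr1; apply: ler_wpM2l => //; lra.
have S2 : \sum_(k < K) ((N%:R)^-1 * Cd * Q k) <= et / 6.
  rewrite (eq_bigr (fun k : 'I_K => (N%:R)^-1 * Cd * Q k)) // -mulr_sumr.
  set X := \sum_(k < K) Q k in hT0 *.
  have X0 : 0 <= X by apply: sumr_ge0 => k _; apply: le_trans (Q1 k).
  have hX : 6 * Cd * X < et * N%:R.
    rewrite ltr_pdivrMr // in hT0; apply: (lt_le_trans hT0).
    rewrite mulrC; apply: ler_wpM2l; first exact: ltW.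
    by apply: le_trans NR; rewrite ler_nat.
  have hu : 0 < (N%:R : R)^-1 by rewrite invr_gt0; lra.
  have e1 : et * N%:R * (N%:R)^-1 = et.
    by rewrite -mulrA mulfV ?mulr1 //; apply: lt0r_neq0; lra.
  have h : 6 * Cd * X * (N%:R)^-1 <= et * N%:R * (N%:R)^-1.
    by apply: ler_wpM2r; [exact: ltW|exact: ltW].
  rewrite e1 in h.
  have -> : (N%:R)^-1 * Cd * X = (6 * Cd * X * (N%:R)^-1) / 6.
    by field; apply: lt0r_neq0; lra.
  lra.
have Hsum : \sum_(k < K) \prod_(j < d) (b k j + del k - (a k j - del k) + (N%:R)^-1) <=
    \sum_(k < K) \prod_(j < d) (b k j - a k j) + et / 6 + et / 6.
  apply: le_trans; first by apply: ler_sum => k _; exact: Hk.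
  rewrite big_split /= big_split /=; lra.
have Bern : n - et / 3 <= n * (1 - 2 / M%:R) ^+ d.
  set w := (M%:R : R)^-1.
  have w0 : 0 < w by rewrite invr_gt0.
  have Mw : M%:R * w = 1 by rewrite mulfV //; apply: lt0r_neq0.
  have u01 : 0 <= 2 / (M%:R : R) <= 1.
    apply/andP; split; first by apply: divr_ge0 => //; rewrite ler0n.
    by rewrite ler_pdivrMr // mul1r.
  have h := @bernoulli R _ d u01.
  have h2 : n * (1 - d%:R * (2 / M%:R)) <= n * (1 - 2 / M%:R) ^+ d by apply: ler_wpM2l.
  apply: le_trans h2.
  have k1 : 6 * n * d%:R <= et * M%:R.
    rewrite ltr_pdivrMr // in hM0; apply: (le_trans (ltW hM0)).
    rewrite mulrC; apply: ler_wpM2l; first exact: ltW.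
    by rewrite ler_nat /M; apply: leq_trans (leqnSn _) (leqnSn _).
  have k2 : 6 * n * d%:R * w <= et * M%:R * w by apply: ler_wpM2r => //; exact: ltW.
  have e3 : et * M%:R * w = et by rewrite -mulrA Mw mulr1.
  rewrite e3 in k2.
  have -> : n * (1 - d%:R * (2 / M%:R)) = n - (6 * n * d%:R * w) / 3.
    by rewrite /w; field; apply: lt0r_neq0.
  by apply: lerB => //; apply: ler_wpM2r => //; rewrite invr_ge0 ler0n.
exists K; apply: fin_arith et0 _.
exact: le_trans Bern (le_trans G Hsum).
Qed.
End LB.

Section LB2.
Variable R : realType.
Variable d : nat.

Lemma leb_lb (S : {fset zpt d}) (A : set (rpt R d)) :
  (forall i (x : rpt R d), i \in S -> (forall j, (i j)%:~R < x j < (i j)%:~R + 1) -> A x) ->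
  ((#|`S|%:R)%:E <= leb A)%E.
Proof.
move=> HA; apply: le_ereal_inf_tmp => _ [[a b] /= [hab hcov] <-].
apply/lee_addgt0Pr => eta eta0.
have [K hK] : exists K, #|`S|%:R <= \sum_(k < K) \prod_(j < d) (b k j - a k j) + eta.
  case: (leP eta 1) => h.
    exact: (@core_claim R d S A a b eta HA hab hcov eta0 h).
  have [K hK] := @core_claim R d S A a b 1 HA hab hcov ltr01 (lexx 1).
  by exists K; apply: (le_trans hK); rewrite lerD2l ltW.
apply: (le_trans (y := ((\sum_(k < K) \prod_(j < d) (b k j - a k j))%:E + eta%:E)%E)).
  by rewrite -EFinD lee_fin.
rewrite leeD2r // -sumEFin -(big_mkord xpredT (fun k => (\prod_(j < d) (b k j - a k j))%:E)).
apply: nneseries_lim_ge => k _ _.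
by rewrite lee_fin; apply: prodr_ge0 => j _; rewrite subr_ge0.
Qed.
End LB2.

Section Comb.
Local Open Scope fset_scope.
Variable d : nat.

Definition shift (i : zpt d) (e : {ffun 'I_d -> bool}) : zpt d :=
  [ffun j => (i j + (e j)%:Z)%R].
Definition unshift (w : zpt d) (e : {ffun 'I_d -> bool}) : zpt d :=
  [ffun j => (w j - (e j)%:Z)%R].
Definition near (Y : {fset zpt d}) (i : zpt d) :=
  [exists e : {ffun 'I_d -> bool}, shift i e \in Y].
Definition fib (w : zpt d) : {fset zpt d} :=
  [fset unshift w e | e in enum {ffun 'I_d -> bool}].

Lemma card_fib w : (#|` fib w| <= 2 ^ d)%N.
Proof.
apply: (leq_trans (leq_imfset_card _ _ _)) => /=.
apply: (leq_trans (size_undup _)).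
by rewrite -cardE card_ffun card_bool card_ord.
Qed.

Lemma card_bigU (s : seq (zpt d)) (P : pred (zpt d)) (F : zpt d -> {fset zpt d}) :
  (#|` \big[fsetU/fset0]_(w <- s | P w) F w| <= \sum_(w <- s | P w) #|` F w|)%N.
Proof.
elim: s => [|w s IH]; first by rewrite !big_nil cardfs0.
rewrite !big_cons; case: (P w) => //.
by rewrite cardfsU; apply: leq_trans (leq_subr _ _) _; rewrite leq_add2l.
Qed.

Lemma bad_sub (X Y : {fset zpt d}) i :
  i \in X `\` Y -> near Y i ->
  i \in \big[fsetU/fset0]_(w <- Y | (0 < valence Y w)%N) fib w.
Proof.
move=> /fsetDP [iX niY] /existsP [e0 he0].
pose cnt (e : {ffun 'I_d -> bool}) := #|[set j | e j]%SET|.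
case: (@arg_minnP _ e0 (fun e => shift i e \in Y) cnt he0) => em wY minm.
set w := shift i em in wY.
have [j0 ej0] : exists j0, em j0.
  apply/existsP; apply: contraR niY => /existsPn H.
  suff <- : w = i by [].
  by apply/ffunP => j; rewrite /w /shift ffunE (negbTE (H j)) addr0.
pose e' := [ffun j => em j && (j != j0)].
have lt : (cnt e' < cnt em)%N.
  apply: proper_card; rewrite properE; apply/andP; split.
    by apply/fintype.subsetP => j; rewrite !inE ffunE => /andP [].
  apply/fintype.subsetPn; exists j0; first by rewrite inE.
  by rewrite inE ffunE eqxx andbF.
have nY : shift i e' \notin Y.
  by apply/negP => /minm; rewrite leqNgt lt.
have inN : shift i e' \in nbrs w.
  apply/fsetUP; right; apply/imfsetP; exists j0 => //.
  apply/ffunP => j; rewrite /w /shift !ffunE.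
  case: (eqVneq j j0) => [->|nj]; first by rewrite ej0 /=; lia.
  by rewrite andbT subr0.
rewrite -big_filter.
have wF : w \in [seq w <- Y | (0 < valence Y w)%N].
  rewrite mem_filter wY andbT /valence cardfs_gt0.
  apply/fset0Pn; exists (shift i e'); by move: inN; rewrite !inE => ->; rewrite nY.
rewrite (big_rem w wF) /=; apply/fsetUP; left.
apply/imfsetP; exists em; first by rewrite mem_enum.
by apply/ffunP => j; rewrite /w /unshift /shift !ffunE addrK.
Qed.

Lemma card_bad (X Y : {fset zpt d}) :
  (#|` [fset i in X `\` Y | near Y i]| <= 2 ^ d * perimeter Y)%N.
Proof.
apply: (leq_trans (fsubset_leq_card (_ : _ `<=` \big[fsetU/fset0]_(w <- Y | (0 < valence Y w)%N) fib w))).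
  apply/fsubsetP => i; rewrite !inE => /andP [/andP [niY iX] ni].
  by apply: (@bad_sub X Y i) => //; apply/fsetDP.
apply: (leq_trans (card_bigU _ _ _)).
rewrite big_mkcond /perimeter big_distrr /=.
apply: leq_sum => w _; case: ifP => // v0.
by apply: (leq_trans (card_fib w)); rewrite leq_pmulr.
Qed.
End Comb.

Section Sort.
Variable R : realType.
Variable d : nat.

Lemma sort_perm (y : 'I_d -> R) :
  exists pi : 'S_d, forall k l : 'I_d, (k <= l)%N -> y (pi l) <= y (pi k).
Proof.
pose prec (a b : 'I_d) := (y b < y a) || ((y a == y b) && (a < b)%N).
have irr : forall a, ~~ prec a a by move=> a; rewrite /prec ltxx eqxx ltnn.
have tr : forall a b c, prec a b -> prec b c -> prec a c.
  move=> a b c; rewrite /prec.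
  case/orP => [h1|/andP [/eqP h1 h1']]; case/orP => [h2|/andP [/eqP h2 h2']].
  - by rewrite (lt_trans h2 h1).
  - by rewrite -h2 h1.
  - by rewrite h1 h2.
  - by rewrite h1 h2 eqxx (ltn_trans h1' h2') orbT.
have tot : forall a b, a != b -> prec a b || prec b a.
  move=> a b nab; rewrite /prec.
  case: (ltgtP (y a) (y b)) => h; rewrite ?orbT //=.
  by case: (ltngtP a b) => // /val_inj/eqP; rewrite (negbTE nab).
pose r (a : 'I_d) := #|[set b | prec b a]%SET|.
have r_lt : forall a, (r a < d)%N.
  move=> a; rewrite -[X in (_ < X)%N]card_ord; apply: proper_card.
  rewrite properE; apply/andP; split; first by apply/fintype.subsetP.
  apply/fintype.subsetPn; exists a => //; by rewrite inE irr.
have r_mono : forall a b, prec a b -> (r a < r b)%N.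
  move=> a b ab; apply: proper_card; rewrite properE; apply/andP; split.
    by apply/fintype.subsetP => c; rewrite !inE => ca; apply: tr ca ab.
  by apply/fintype.subsetPn; exists a; rewrite !inE ?ab ?irr.
pose rr (a : 'I_d) := Ordinal (r_lt a).
have rr_inj : injective rr.
  move=> a b /(congr1 val) /= eab; apply/eqP; apply: contraT => nab.
  by case/orP: (tot _ _ nab) => /r_mono; rewrite eab ltnn.
exists (perm rr_inj)^-1%g => k l kl.
set a := (perm rr_inj)^-1%g k; set b := (perm rr_inj)^-1%g l.
have ra : r a = k by rewrite /a -[in RHS](permKV (perm rr_inj) k) permE.
have rb : r b = l by rewrite /b -[in RHS](permKV (perm rr_inj) l) permE.
case: (eqVneq a b) => [->|nab]; first exact: lexx.
case/orP: (tot _ _ nab) => h.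
  move: h; rewrite /prec => /orP [h|/andP [/eqP -> _]]; [exact: ltW|exact: lexx].
by have := r_mono _ _ h; rewrite ra rb ltnNge kl.
Qed.
End Sort.

Section Final.
Variable R : realType.
Variable d : nat.

Lemma zeta_cube (X : {fset zpt d}) (i : zpt d) (x : rpt R d) : i \in X ->
  (forall j, (i j)%:~R < x j < (i j)%:~R + 1) -> zeta X x.
Proof.
move=> iX hx.
have [pi hpi] := @sort_perm R d (fun j => x j - (i j)%:~R).
exists i; split => //; exists i, pi; split.
  rewrite /kuhn /T_pi /embed /=; split => [j|k l _]; rewrite subrr; lra.
rewrite /kuhn /T_pi /=; split => [j|k l kl]; last exact: hpi.
have /andP [h1 h2] := hx j; apply/andP; split; lra.
Qed.

Lemma zeta_near (Y : {fset zpt d}) (i : zpt d) (x : rpt R d) :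
  (forall j, (i j)%:~R < x j < (i j)%:~R + 1) -> zeta Y x -> near d Y i.
Proof.
move=> hx [v [vY [z [pi [kv kx]]]]].
move: kv kx; rewrite /kuhn /T_pi /embed /= => [[hv _] [hz _]].
have ez : forall j, z j = i j.
  move=> j; have /andP [a1 a2] := hx j; have /andP [b1 b2] := hz j.
  have c1 : (z j)%:~R < (i j + 1)%:~R :> R by rewrite intrD; lra.
  have c2 : (i j)%:~R < (z j + 1)%:~R :> R by rewrite intrD; lra.
  rewrite ltr_int in c1; rewrite ltr_int in c2; lia.
apply/existsP; exists [ffun j => v j != i j].
suff -> : shift d i [ffun j => v j != i j] = v by [].
apply/ffunP => j; rewrite /shift !ffunE.
have /andP [b1 b2] := hv j; rewrite ez in b1 b2.
have c1 : (i j)%:~R <= (v j)%:~R :> R by lra.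
have c2 : (v j)%:~R <= (i j + 1)%:~R :> R by rewrite intrD; lra.
rewrite ler_int in c1; rewrite ler_int in c2.
case: eqVneq => [->|nv] /=; first by rewrite addr0.

have h : i j < v j by rewrite lt_neqAle c1 andbT eq_sym.
by rewrite -lezD1 in h; apply/le_anti; rewrite h c2.
Qed.

Lemma part (X Y : {fset zpt d}) :
  let G := ((X `\` Y) `\` [fset i in X `\` Y | near d Y i])%fset in
  [/\ (#|` (X `\` Y)%fset| <= #|` G| + 2 ^ d * perimeter Y)%N,
      (G `<=` X `\` Y)%fset &
      forall i (x : rpt R d), i \in G -> (forall j, (i j)%:~R < x j < (i j)%:~R + 1) ->
        (zeta X `\` zeta Y) x].
Proof.
move=> G; split.
- have := cardfsID [fset i in X `\` Y | near d Y i]%fset (X `\` Y)%fset.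
  move=> <-; rewrite addnC leq_add2l.
  apply: leq_trans (card_bad d X Y).
  by apply: fsubset_leq_card; apply: fsubsetIr.
- exact: fsubsetDl.
- move=> i x; rewrite /G !inE => /andP [nb /andP [niY iX]] hx.
  split; first exact: (zeta_cube X i x iX hx).
  by move=> /(zeta_near Y i x hx) nr; move: nb; rewrite nr niY iX.
Qed.

End Final.

Theorem mainTheorem13 (R : realType) (d : nat) (hd : (2 <= d)%N) :
  exists C : R, 0 < C /\
    forall X Y : {fset zpt d},
      ((#|` (X `\` Y)%fset |%:R)%:E
         <= leb (zeta (R:=R) X `\` zeta (R:=R) Y) + (C * (perimeter Y)%:R)%:E)%E /\
      ((#|` ((X `\` Y) `|` (Y `\` X))%fset |%:R)%:E
         <= leb ((zeta (R:=R) X `\` zeta (R:=R) Y) `|` (zeta (R:=R) Y `\` zeta (R:=R) X))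
            + (C * ((perimeter X)%:R + (perimeter Y)%:R))%:E)%E.
Proof.
exists (2 ^ d)%:R; split; first by rewrite ltr0n expn_gt0.
move=> X Y.
have [c1 s1 z1] := part R d X Y; have [c2 s2 z2] := part R d Y X.
set G1 := ((X `\` Y) `\` _)%fset in c1 s1 z1.
set G2 := ((Y `\` X) `\` _)%fset in c2 s2 z2.
split.
  apply: (le_trans (y := ((#|` G1|%:R)%:E + ((2 ^ d)%:R * (perimeter Y)%:R)%:E)%E)).
    by rewrite -EFinD lee_fin -natrM -natrD ler_nat.
  by apply: leeD => //; apply: (leb_lb R d).
have disj : (G1 `&` G2 = fset0)%fset.
  apply/fsetP => i; rewrite inE [in RHS]inE; apply/negbTE/negP => /andP [h1 h2].
  move: (fsubsetP s1 _ h1) (fsubsetP s2 _ h2); rewrite !inE => /andP [a b] /andP [c e].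
  by rewrite b in c.
have cU : (#|` ((X `\` Y) `|` (Y `\` X))%fset| <= #|` (G1 `|` G2)%fset| +
    2 ^ d * (perimeter X + perimeter Y))%N.
  have h1 := cardfsUI (X `\` Y)%fset (Y `\` X)%fset.
  have h2 := cardfsUI G1 G2; rewrite disj cardfs0 addn0 in h2.
  rewrite mulnDr; lia.
apply: (le_trans (y := ((#|` (G1 `|` G2)%fset|%:R)%:E +
    ((2 ^ d)%:R * ((perimeter X)%:R + (perimeter Y)%:R))%:E)%E)).
  by rewrite -EFinD lee_fin -natrD -natrM -natrD ler_nat.
apply: leeD => //; apply: (leb_lb R d) => i x iS hx.
case/fsetUP: iS => iS; [left; exact: z1 iS hx | right; exact: z2 iS hx].
Qed.
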